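(* Let $t\in[n]$, let $S\subseteq N$ be $t$-switchable, let $a\in S$ and $b\in N$. Let $L\subseteq[t]$ be such that ${\rm s}(l,a,b)\in S$ for all $l\in L$. Then ${\rm s}(L,a,b)\in S$.
   Context: Fix positive integers $n, r_1,\dots,r_n$ and let $N=[r_1]\times\cdots\times[r_n]$. For $L\subseteq[n]$ and $a,b\in N$, ${\rm s}(L,a,b)\in N$ has $i$-th component $b_i$ if $i\in L$ and $a_i$ otherwise; ${\rm s}(l,a,b)={\rm s}(\{l\},a,b)$. Let $d(a,b)=\#\{j: a_j\neq b_j\}$. A subset $S\subseteq N$ is $t$-switchable if for all $a,b\in S$ with $d(a,b)=2$ and all $i\in[t]$, ${\rm s}(i,a,b)\in S$. *)

(* Defs.v *)
From mathcomp Require Import all_boot.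
Set Implicit Arguments. Unset Strict Implicit. Unset Printing Implicit Defensive.

(* Coordinates [n] are 'I_n (index i : 'I_n stands for i+1 in the paper).
   N = [r_1] x ... x [r_n] is the finite type of dependent finite functions. *)
Definition grid (n : nat) (r : 'I_n -> nat) : finType :=
  {dffun forall i : 'I_n, 'I_(r i)}.

Definition sw n (r : 'I_n -> nat) (L : {set 'I_n}) (a b : grid r) : grid r :=
  [ffun i => if i \in L then b i else a i].

Definition dist n (r : 'I_n -> nat) (a b : grid r) : nat :=
  #|[set j : 'I_n | a j != b j]|.

(* [t] as a set of coordinates: indices i with i < t (i.e. paper index i+1 <= t) *)
Definition first_coords n (t : nat) : {set 'I_n} := [set i : 'I_n | i < t].

Definition switchable n (r : 'I_n -> nat) (t : nat) (S : {set grid r}) : Prop :=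
  forall a b, a \in S -> b \in S -> dist a b = 2 ->
    forall i : 'I_n, i \in first_coords n t -> sw [set i] a b \in S.

(* Main.v *)
Require Import Defs.
From mathcomp Require Import all_boot.

Theorem lemma3p2 (n : nat) (r : 'I_n -> nat) (r_pos : forall i, 0 < r i)
  (t : nat) (ht : 1 <= t <= n) (S : {set grid r}) (hS : switchable t S)
  (a b : grid r) (ha : a \in S) (L : {set 'I_n})
  (hL : L \subset first_coords n t)
  (hLS : forall l, l \in L -> sw [set l] a b \in S) :
  sw L a b \in S.
Proof.
set L' := [set l in L | a l != b l].
have swE : forall K j, sw K a b j = if j \in K then b j else a j.
  by move=> K j; rewrite /sw ffunE.
have key : forall m (K : {set 'I_n}), #|K| <= m -> K \subset L' -> sw K a b \in S.
  elim=> [|m IH] K hK sK.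
    move: hK; rewrite leqn0 cards_eq0 => /eqP ->.
    suff -> : sw set0 a b = a by [].
    by apply/ffunP => j; rewrite swE in_set0.
  case: (set_0Vmem K) => [->|[k1 k1K]].
    suff -> : sw set0 a b = a by [].
    by apply/ffunP => j; rewrite swE in_set0.
  have k1L' := subsetP sK _ k1K.
  move: (k1L'); rewrite inE => /andP [k1L ab1].
  case: (set_0Vmem (K :\ k1)) => [E|[k2 k2K]].
    suff -> : sw K a b = sw [set k1] a b by apply: hLS.
    apply/ffunP => j; rewrite !swE in_set1.
    case: (eqVneq j k1) => [->|ne]; first by rewrite k1K.
    have : j \notin K :\ k1 by rewrite E in_set0.
    by rewrite in_setD1 ne /= => /negbTE ->.
  move: (k2K); rewrite in_setD1 => /andP [ne21 k2K'].
  have k2L' := subsetP sK _ k2K'.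
  move: (k2L'); rewrite inE => /andP [k2L ab2].
  have c1 : #|K| = (#|K :\ k1|).+1 by rewrite (cardsD1 k1 K) k1K.
  have c2 : #|K| = (#|K :\ k2|).+1 by rewrite (cardsD1 k2 K) k2K'.
  have hx : sw (K :\ k1) a b \in S.
    apply: IH; first by move: hK; rewrite c1.
    by apply: subset_trans sK; apply: subsetDl.
  have hy : sw (K :\ k2) a b \in S.
    apply: IH; first by move: hK; rewrite c2.
    by apply: subset_trans sK; apply: subsetDl.
  have hd : dist (sw (K :\ k1) a b) (sw (K :\ k2) a b) = 2.
    rewrite /dist.
    have -> : [set j | sw (K :\ k1) a b j != sw (K :\ k2) a b j] = [set k1; k2].
      apply/setP => j; rewrite !inE !swE !in_setD1.
      case: (eqVneq j k1) => [E1|n1] /=.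
        subst j; have n12 : k1 != k2 by rewrite eq_sym.
        by rewrite n12 k1K /= ab1.
      case: (eqVneq j k2) => [E2|n2] /=; first by subst j; rewrite k2K' eq_sym ab2 ?orbT.
      by rewrite eqxx.
    by rewrite cards2 eq_sym ne21.
  have hk1 : k1 \in first_coords n t by apply: (subsetP hL).
  have := hS _ _ hx hy hd k1 hk1.
  suff -> : sw [set k1] (sw (K :\ k1) a b) (sw (K :\ k2) a b) = sw K a b by [].
  apply/ffunP => j; rewrite /sw !ffunE in_set1 !in_setD1.
  case: (eqVneq j k1) => [->|n1] /=; first by rewrite eq_sym ne21 k1K.
  by [].
have -> : sw L a b = sw L' a b.
  apply/ffunP => j; rewrite !swE inE.
  by case: (j \in L) => //=; case: eqP => [->|].
by apply: (key #|L'|) => //.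
Qed.
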